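(* Let $\mathcal{H}=(\mathcal{T},\mathsf{SO})$ be a history and let $\mathcal{G}=(\mathcal{V},\mathcal{E},(\mathcal{C}^{\mathsf{WW}},\mathcal{C}^{\mathsf{WR}}))$ be the hyper-polygraph of $\mathcal{H}$. Then $\mathcal{H}$ satisfies Serializability if and only if $\mathcal{H}$ satisfies $\textsc{Int}$ and there exists an acyclic directed labeled graph that is compatible with $\mathcal{G}$.
   Context: Fix a set of keys $\mathsf{Key}$ and a set of values $\mathsf{Val}$. An operation is a read $\mathsf{R}(x,v)$ or a write $\mathsf{W}(x,v)$ with $x\in\mathsf{Key}$, $v\in\mathsf{Val}$ (each operation carries a unique identifier). A transaction is a pair $(O,\mathsf{po})$ where $O$ is a finite non-empty set of operations and $\mathsf{po}$ (program order) is a strict total order on $O$. A history is a pair $\mathcal{H}=(\mathcal{T},\mathsf{SO})$ where $\mathcal{T}$ is a set of transactions with pairwise disjoint operation sets and $\mathsf{SO}\subseteq\mathcal{T}\times\mathcal{T}$ (session order) is a union of strict total orders on pairwise disjoint subsets of $\mathcal{T}$. Every history contains a special transaction $T_\bot$ that writes the initial value of every key and precedes every other transaction in $\mathsf{SO}$. Notation: $T\vdash \mathsf{W}(x,v)$ means $T$ writes to $x$ and $v$ is the value of its $\mathsf{po}$-last write to $x$; $T\vdash\mathsf{R}(x,v)$ means $T$ reads $x$ before (in $\mathsf{po}$) any write of $T$ to $x$, and $v$ is the value returned by the first such read. $\mathsf{WriteTx}_x=\{T\mid T\vdash\mathsf{W}(x,\_)\}$, where $\_$ denotes an existentially quantified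 value. $\mathcal{H}$ satisfies $\textsc{Int}$ (internal consistency) if in every transaction, every read of a key $x$ that is $\mathsf{po}$-preceded by some operation on $x$ returns the value of the $\mathsf{po}$-latest preceding operation on $x$ (the value written, if a write; the value returned, if a read). $\mathcal{H}$ satisfies Serializability if $\mathcal{H}\models\textsc{Int}$ and there is a strict total order $\prec$ on $\mathcal{T}$ containing $\mathsf{SO}$ such that for every $S\in\mathcal{T}$, key $x$ and value $v$ with $S\vdash\mathsf{R}(x,v)$, the $\prec$-greatest transaction $T\prec S$ with $T\in\mathsf{WriteTx}_x$ satisfies $T\vdash\mathsf{W}(x,v)$. Hyper-polygraph of $\mathcal{H}$: $\mathcal{G}=(\mathcal{V},\mathcal{E},(\mathcal{C}^{\mathsf{WW}},\mathcal{C}^{\mathsf{WR}}))$ where $\mathcal{V}=\mathcal{T}$; edges are tuples $(T,S,\mathsf{t},x)$, written $T\xrightarrow{\mathsf{t}(x)}S$, with type $\mathsf{t}\in\{\mathsf{SO},\mathsf{WR},\mathsf{WW},\mathsf{RW}\}$ and key $x$ (irrelevant for $\mathsf{SO}$); the known edge set $\mathcal{E}$ consists of $T\xrightarrow{\mathsf{SO}}S$ for all $(T,S)\in\mathsf{SO}$, and $T\xrightarrow{\mathsf{WR}(x)}S$ whenever $S\vdash\mathsf{R}(x,v)$ and $T$ is the unique transaction with $T\vdash\mathsf{W}(x,v)$; $\mathcal{C}^{\mathsf{WW}}=\{\{T\xrightarrow{\mathsf{WW}(x)}S,\ S\xrightarrow{\mathsf{WW}(x)}T\}\mid x\in\mathsf{Key},\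 T,S\in\mathsf{WriteTx}_x,\ T\neq S\}$; $\mathcal{C}^{\mathsf{WR}}=\{\{T_i\xrightarrow{\mathsf{WR}(x)}S\mid T_i\vdash\mathsf{W}(x,v)\}\mid S\vdash\mathsf{R}(x,v)\}$. A directed labeled graph $\mathcal{G}'=(\mathcal{V}',\mathcal{E}')$ is compatible with $\mathcal{G}$ if $\mathcal{V}'=\mathcal{V}$; $\mathcal{E}'\supseteq\mathcal{E}$; for all keys $x$ and all $T,T',S\in\mathcal{V}$ with $T\neq S$, if $T'\xrightarrow{\mathsf{WR}(x)}T\in\mathcal{E}'$ and $T'\xrightarrow{\mathsf{WW}(x)}S\in\mathcal{E}'$ then $T\xrightarrow{\mathsf{RW}(x)}S\in\mathcal{E}'$; and $|\mathcal{E}'\cap C|=1$ for every $C\in\mathcal{C}^{\mathsf{WW}}\cup\mathcal{C}^{\mathsf{WR}}$. A labeled graph is acyclic if the underlying relation on vertices (ignoring labels and keys) has no directed cycle, including self-loops. *)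

(* Defs.v *)
From mathcomp Require Import all_boot.
From Stdlib Require Import Relations.
Set Implicit Arguments. Unset Strict Implicit. Unset Printing Implicit Defensive.

Section Histories.
Variables (Key : finType) (Val : Type) (Tx : finType).

(* Operations: reads R(x,v) and writes W(x,v).  A transaction (O,po) is
   represented by the po-ordered list of its operations; list positions play
   the role of the unique operation identifiers. *)
Inductive op := Rd of Key & Val | Wr of Key & Val.

Definition op_key (o : op) : Key := match o with Rd x _ | Wr x _ => x end.
Definition op_val (o : op) : Val := match o with Rd _ v | Wr _ v => v end.
Definition is_write (o : op) : bool := if o is Wr _ _ then true else false.

Variable ops : Tx -> seq op.
Variable SO : Tx -> Tx -> Prop.
Variable Tbot : Tx.

Definition writes (T : Tx) (x : Key) (v : Val) : Prop :=
  exists p q, ops T = p ++ Wr x v :: q /\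
    all (fun o => ~~ (is_write o && (op_key o == x))) q.

Definition reads (T : Tx) (x : Key) (v : Val) : Prop :=
  exists p q, ops T = p ++ Rd x v :: q /\ all (fun o => op_key o != x) p.

Definition WriteTx (x : Key) (T : Tx) : Prop := exists v, writes T x v.

(* SO is a union of strict total orders on pairwise disjoint subsets of the
   non-initial transactions, plus Tbot preceding every other transaction. *)
Definition is_history : Prop :=
  (forall T, ops T <> [::]) /\
  (forall x, exists v, writes Tbot x v) /\
  exists (R : Tx -> Tx -> Prop) (sess : Tx -> nat),
    (forall T S, R T S -> T <> Tbot /\ S <> Tbot /\ sess T = sess S) /\
    (forall T, ~ R T T) /\
    (forall T S U, R T S -> R S U -> R T U) /\
    (forall T S, T <> Tbot -> S <> Tbot -> sess T = sess S -> T <> S ->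
                 R T S \/ R S T) /\
    (forall T S, SO T S <-> R T S \/ (T = Tbot /\ S <> Tbot)).

Definition Int : Prop :=
  forall T p1 o p2 q x v,
    ops T = p1 ++ o :: p2 ++ Rd x v :: q ->
    op_key o = x -> all (fun o' => op_key o' != x) p2 ->
    op_val o = v.

Definition strict_total (prec : Tx -> Tx -> Prop) : Prop :=
  (forall T, ~ prec T T) /\
  (forall T S U, prec T S -> prec S U -> prec T U) /\
  (forall T S, T <> S -> prec T S \/ prec S T).

Definition Serializable : Prop :=
  Int /\
  exists prec : Tx -> Tx -> Prop,
    strict_total prec /\ (forall T S, SO T S -> prec T S) /\
    forall S x v, reads S x v ->
      exists T, WriteTx x T /\ prec T S /\
        (forall T', WriteTx x T' -> prec T' S -> T' = T \/ prec T' T) /\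
        writes T x v.

Inductive edge :=
  | ESO of Tx & Tx
  | EWR of Key & Tx & Tx
  | EWW of Key & Tx & Tx
  | ERW of Key & Tx & Tx.

Definition src (e : edge) : Tx :=
  match e with ESO a _ | EWR _ a _ | EWW _ a _ | ERW _ a _ => a end.
Definition dst (e : edge) : Tx :=
  match e with ESO _ b | EWR _ _ b | EWW _ _ b | ERW _ _ b => b end.

Definition known_edge (e : edge) : Prop :=
  match e with
  | ESO a b => SO a b
  | EWR x a b => exists v, reads b x v /\ writes a x v /\
                   (forall T', writes T' x v -> T' = a)
  | _ => False
  end.

Definition cWW (x : Key) (T S : Tx) (e : edge) : Prop :=
  e = EWW x T S \/ e = EWW x S T.
Definition cWR (S : Tx) (x : Key) (v : Val) (e : edge) : Prop :=
  exists Ti, writes Ti x v /\ e = EWR x Ti S.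

Definition exactly_one (E' C : edge -> Prop) : Prop :=
  exists! e, E' e /\ C e.

Definition compatible (E' : edge -> Prop) : Prop :=
  (forall e, known_edge e -> E' e) /\
  (forall x T T' S, T <> S -> E' (EWR x T' T) -> E' (EWW x T' S) ->
                    E' (ERW x T S)) /\
  (forall x T S, WriteTx x T -> WriteTx x S -> T <> S -> exactly_one E' (cWW x T S)) /\
  (forall S x v, reads S x v -> exactly_one E' (cWR S x v)).

Definition graph_rel (E' : edge -> Prop) (T S : Tx) : Prop :=
  exists e, E' e /\ src e = T /\ dst e = S.

Definition acyclic (E' : edge -> Prop) : Prop :=
  forall T, ~ clos_trans Tx (graph_rel E') T T.

End Histories.

(* Main.v *)
Require Import Defs.
From mathcomp Require Import all_boot.
From Stdlib Require Import Relations Classical ClassicalEpsilon.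
From mathcomp Require Import zify.

Definition pb (P : Prop) : bool :=
  if excluded_middle_informative P then true else false.
Lemma pbP (P : Prop) : reflect P (pb P).
Proof. rewrite /pb; case: excluded_middle_informative => H; constructor; done. Qed.

Section Proof.
Variables (Key : finType) (Val : Type) (Tx : finType)
    (ops : Tx -> seq (op Key Val)) (SO : Tx -> Tx -> Prop).

Lemma dir1 : Serializable ops SO ->
   Int ops /\ exists E' : edge Key Tx -> Prop,
                compatible ops SO E' /\ acyclic E'.
Proof.
move=> [HInt [prec [[Hirr [Htr Htot]] [HSO Hrd]]]].
split => //.
pose great x a b := WriteTx ops x a /\ prec a b /\
   (forall T', WriteTx ops x T' -> prec T' b -> T' = a \/ prec T' a).
have guniq : forall x a a' b, great x a b -> great x a' b -> a = a'.
  move=> x a a' b [Wa [Pa Ga]] [Wa' [Pa' Ga']].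
  case: (Ga' a Wa Pa) => // H1; case: (Ga a' Wa' Pa') => // H2.
  by case: (Hirr a); apply: Htr H1 H2.
pose E' (e : edge Key Tx) : Prop := match e with
  | ESO a b => SO a b
  | EWR x a b => great x a b
  | EWW x a b => WriteTx ops x a /\ WriteTx ops x b /\ prec a b
  | ERW x a b => a <> b /\ exists T', great x T' a /\
        (WriteTx ops x T' /\ WriteTx ops x b /\ prec T' b) end.
have Hfw : forall e, E' e -> prec (src e) (dst e).
  case=> [a b|x a b|x a b|x a b] /=.
  - exact: HSO.
  - by case=> _ [].
  - by case=> _ [].
  - move=> [nab [T' [[_ [_ G]] [_ [Wb Pb]]]]].
    case: (Htot a b nab) => // Hba.
    case: (G b Wb Hba) => [Eb|Hb].
      by rewrite Eb in Pb; case: (Hirr T').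
    by case: (Hirr T'); apply: Htr Pb Hb.
exists E'; split; last first.
  have Hct : forall a b, clos_trans Tx (graph_rel E') a b -> prec a b.
    move=> a b H; induction H as [a b [e [He [Ha Hb]]]|a b c _ H1 _ H2].
      subst a b; exact: Hfw.
    exact: Htr H1 H2.
  move=> T HT; exact: Hirr (Hct _ _ HT).
split.
  case=> [a b|x a b|x a b|x a b] //=.
  move=> [v [Hr [Hw Hu]]].
  have [T [WT [PT [GT wT]]]] := Hrd _ _ _ Hr.
  by rewrite -(Hu _ wT).
split.
  move=> x T T' S nTS HWR HWW /=; split => //; exists T'; split => //.
split.
  move=> x T S WT WS nTS.
  case: (Htot T S nTS) => H.
  - exists (EWW x T S); split; first by split => //; left.
    move=> e' [He' [He|He]]; subst e' => //.
    move: He' => /= [_ [_ H']]; case: (Hirr T); exact: Htr H H'.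
  - exists (EWW x S T); split; first by split => //; right.
    move=> e' [He' [He|He]]; subst e' => //.
    move: He' => /= [_ [_ H']]; case: (Hirr T); exact: Htr H' H.
move=> S x v Hr.
have [T [WT [PT [GT wT]]]] := Hrd _ _ _ Hr.
exists (EWR x T S); split.
  split; first by split.
  by exists T.
move=> e' [He' [Ti [wTi He]]]; subst e'.
by rewrite (guniq x T Ti S (conj WT (conj PT GT)) He').
Qed.

Lemma dir2 : (Int ops /\ exists E' : edge Key Tx -> Prop,
                compatible ops SO E' /\ acyclic E') -> Serializable ops SO.
Proof.
move=> [HInt [E' [[Hk [Hrw [Hww Hwr]]] Hac]]].
split => //.
pose ct U T := clos_trans Tx (graph_rel E') U T.
pose depth T := #|[set U | pb (ct U T)]|.
pose rk (T : Tx) := nat_of_ord (enum_rank T).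
have rkinj : forall T S, rk T = rk S -> T = S.
  by move=> T S H; apply: enum_rank_inj; apply: val_inj.
have Hd : forall T S, graph_rel E' T S -> depth T < depth S.
  move=> T S HTS; apply: proper_card; apply/properP; split.
    apply/subsetP => U; rewrite !inE => /pbP H; apply/pbP.
    by apply: t_trans H (t_step _ _ _ _ HTS).
  exists T; rewrite inE; apply/pbP; first exact: t_step.
  exact: Hac.
pose prec T S := depth T < depth S \/ (depth T = depth S /\ rk T < rk S).
have Hirr : forall T, ~ prec T T by move=> T; rewrite /prec; lia.
have Htr : forall T S U, prec T S -> prec S U -> prec T U by rewrite /prec; lia.
have Htot : forall T S, T <> S -> prec T S \/ prec S T.
  move=> T S nTS; have : rk T <> rk S by move=> /rkinj.
  rewrite /prec; lia.
have Hedge : forall e, E' e -> prec (src e) (dst e).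
  move=> e He; left; apply: Hd; by exists e.
exists prec; split; first by split => //; split.
split.
  move=> T S HTS; by have /= := Hedge (@ESO Key Tx T S) (Hk (@ESO Key Tx T S) HTS).
move=> S x v Hr.
have [e [[HE [Ti [wTi Hee]]] _]] := Hwr S x v Hr.
subst e.
have PTi := Hedge _ HE; rewrite /= in PTi.
exists Ti; split; first by exists v.
split => //; split => //.
move=> T' WT' PT'.
case: (classic (T' = Ti)) => [->|nT']; first by left.
have WTi : WriteTx ops x Ti by exists v.
have [e' [[HE' [He|He]] _]] := Hww x Ti T' WTi WT' (nesym nT'); subst e'.
- have nST : S <> T' by move=> E; subst; case: (Hirr _ PT').
  have := Hedge _ (Hrw x S Ti T' nST HE HE') => /= H.
  by case: (Hirr S); apply: Htr H PT'.
- by right; exact: (Hedge _ HE').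
Qed.
End Proof.

Theorem theorem3p5 (Key : finType) (Val : Type) (Tx : finType)
    (ops : Tx -> seq (op Key Val)) (SO : Tx -> Tx -> Prop) (Tbot : Tx) :
  is_history ops SO Tbot ->
  (Serializable ops SO <->
   Int ops /\ exists E' : edge Key Tx -> Prop,
                compatible ops SO E' /\ acyclic E').
Proof.
move=> _; split; [exact: dir1 | exact: dir2].
Qed.
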